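(* Fix integers $1\le i<s\le t\le r$. For $m\ge1$ let $M(m)$ be the maximum of $k^t(\mathcal H)$ over all $s$-graphs $\mathcal H$ with $m$ edges and $\Delta_i(\mathcal H)\le\binom{r-i}{s-i}$. Then \[M(m)=(1-o(1))\,m\frac{\binom{r}{t}}{\binom{r}{s}}\quad\text{as } m\to\infty.\]
   Context: An $s$-graph is a family of $s$-subsets (edges) of a vertex set. For $|I|=i$, $d_{\mathcal H}(I)$ is the number of edges containing $I$ and $\Delta_i(\mathcal H)=\max_{|I|=i}d_{\mathcal H}(I)$. $k^t(\mathcal H)$ is the number of $t$-sets all of whose $s$-subsets are edges. *)

(* Defs.v *)
From mathcomp Require Import all_boot all_order all_algebra.
Set Implicit Arguments. Unset Strict Implicit. Unset Printing Implicit Defensive.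
Import Order.TTheory GRing.Theory Num.Theory.

Section Hypergraphs.
Variable V : finType.

Definition is_sgraph (s : nat) (H : {set {set V}}) : Prop :=
  forall e, e \in H -> #|e| = s.

Definition hdeg (H : {set {set V}}) (I : {set V}) : nat :=
  #|[set e in H | I \subset e]|.

Definition Delta (i : nat) (H : {set {set V}}) : nat :=
  \max_(I : {set V} | #|I| == i) hdeg H I.

Definition kt (s t : nat) (H : {set {set V}}) : nat :=
  #|[set T : {set V} | (#|T| == t) &&
      [forall S : {set V}, ((S \subset T) && (#|S| == s)) ==> (S \in H)]]|.
End Hypergraphs.

(* Main.v *)
Require Import Defs.
From mathcomp Require Import all_boot all_order all_algebra.
Import Order.TTheory GRing.Theory Num.Theory.
From mathcomp Require Import ring lra zify.
Set Implicit Arguments. Unset Strict Implicit. Unset Printing Implicit Defensive.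

Section Core.
Variable V : finType.
Implicit Types (G F : {set {set V}}) (B S : {set V}).

Definition unif (c : nat) G := forall e, e \in G -> #|e| = c.

Definition clq (c k : nat) G : {set {set V}} :=
  [set B : {set V} | (#|B| == k) &&
      [forall S : {set V}, ((S \subset B) && (#|S| == c)) ==> (S \in G)]].

Lemma clqP c k G B : reflect (#|B| = k /\ forall S, S \subset B -> #|S| = c -> S \in G)
  (B \in clq c k G).
Proof.
rewrite inE; apply: (iffP andP) => [[/eqP -> /forallP h]|[-> h]]; split=> //.
  by move=> S sSB cS; have := h S; rewrite sSB cS eqxx.
by apply/forallP=> S; apply/implyP=> /andP[sSB /eqP cS]; apply: h.
Qed.

Lemma clq_unif c k G : unif k (clq c k G).
Proof. by move=> B /clqP[]. Qed.

Lemma sum_deg k F : unif k F ->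
  \sum_(v : V) #|[set B in F | v \in B]| = k * #|F|.
Proof.
move=> hF.
transitivity (\sum_(v : V) \sum_(B in F) (v \in B : nat)).
  by apply: eq_bigr => v _; rewrite -sum1_card big_mkcond [RHS]big_mkcond /=;
     apply: eq_bigr => B _; rewrite inE; case: (B \in F); case: (v \in B).
rewrite exchange_big /= -sum1_card big_distrr /=.
apply: eq_bigr => B hB; rewrite muln1 -(hF B hB) -sum1_card [RHS]big_mkcond /=.
by apply: eq_bigr => v _; case: (v \in B).
Qed.

Lemma sum_sdeg k j F : unif k F ->
  \sum_(I : {set V} | #|I| == j) #|[set B in F | I \subset B]| = 'C(k, j) * #|F|.
Proof.
move=> hF.
transitivity (\sum_(I : {set V} | #|I| == j) \sum_(B in F) (I \subset B : nat)).
  by apply: eq_bigr => v _; rewrite -sum1_card big_mkcond [RHS]big_mkcond /=;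
     apply: eq_bigr => B _; rewrite inE; case: (B \in F); case: (v \subset B).
rewrite exchange_big /= -sum1_card big_distrr /=.
apply: eq_bigr => B hB; rewrite muln1 -(hF B hB) -cards_draws -sum1_card.
rewrite [RHS]big_mkcond [LHS]big_mkcond /=.
by apply: eq_bigr => I _; rewrite inE; case: (I \subset B); case: (#|I| == j).
Qed.


Lemma clq_del c G B x : B \in clq c c.+1 G -> x \in B -> B :\ x \in G.
Proof.
move=> /clqP[cB h] xB; apply: h; first exact: subD1set.
by move: cB; rewrite (cardsD1 x) xB add1n => -[].
Qed.

Lemma clq0 c G : #|G| = 0 -> #|clq c c.+1 G| = 0.
Proof.
move=> /cards0_eq ->; apply/eqP; rewrite cards_eq0; apply/eqP/setP=> B.
rewrite in_set0; apply/negP=> hB.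
have /set0Pn[x xB] : B != set0.
  by apply/negP=> /eqP e; move: hB => /clqP[]; rewrite e cards0.
by move: (clq_del hB xB); rewrite inE.
Qed.

Lemma L1_1 n G : unif 1 G -> #|G| <= 'C(n, 1) ->
  2 * #|clq 1 2 G| <= #|G| * (n - 1).
Proof.
move=> hG; rewrite bin1 => hn.
pose U := [set x : V | [set x] \in G].
have GU : G = [set [set x] | x in U].
  apply/setP=> e; apply/idP/imsetP => [he|[x]]; last by rewrite inE => h ->.
  by have [x ex] := cards1P (introT eqP (hG e he)); exists x; rewrite // inE -ex.
have cU : #|G| = #|U| by rewrite GU card_imset //; apply: set1_inj.
have sub : clq 1 2 G \subset [set A : {set V} | A \subset U & #|A| == 2].
  apply/subsetP=> B /clqP[cB h]; rewrite inE cB eqxx andbT.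
  by apply/subsetP=> x xB; rewrite inE; apply: h; rewrite ?sub1set ?cards1.
have := subset_leq_card sub; rewrite cards_draws => h2.
have e2 : 2 * 'C(#|U|, 2) = #|U| * (#|U| - 1).
  by rewrite -mul_bin_diag bin1 subn1.
rewrite cU; apply: (leq_trans (leq_mul (leqnn 2) h2)); rewrite e2 leq_mul2l.
by rewrite leq_sub2r ?orbT // -cU.
Qed.

Lemma inj_card (A D : {set {set V}}) (f : {set V} -> {set V}) :
  {in A &, injective f} -> (forall x, x \in A -> f x \in D) -> #|A| <= #|D|.
Proof.
move=> fi fD; rewrite -(card_in_imset fi); apply: subset_leq_card.
by apply/subsetP=> y /imsetP[x xA ->]; apply: fD.
Qed.

Lemma injD1 v (A : {set {set V}}) : (forall B, B \in A -> v \in B) ->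
  {in A &, injective (fun B => B :\ v)}.
Proof.
by move=> h B1 B2 h1 h2 /= e; rewrite -(setD1K (h _ h1)) -(setD1K (h _ h2)) e.
Qed.

Definition Gv v G := [set Y : {set V} | (v \notin Y) && (v |: Y \in G)].

Lemma card_Gv v G : #|Gv v G| = #|[set e in G | v \in e]|.
Proof.
apply/eqP; rewrite eqn_leq; apply/andP; split.
  apply: (@inj_card _ _ (fun Y => v |: Y)).
    move=> Y1 Y2; rewrite !inE => /andP[h1 _] /andP[h2 _] /= e.
    by rewrite -(setU1K h1) -(setU1K h2) e.
  by move=> Y; rewrite !inE => /andP[_ ->]; rewrite eqxx.
apply: (@inj_card _ _ (fun B => B :\ v)).
  by apply: injD1 => B; rewrite inE => /andP[].
move=> B; rewrite !inE => /andP[hB vB] /=; rewrite eqxx setD1K //.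
Qed.

Lemma card_split v G : #|G| = #|[set e in G | v \notin e]| + #|[set e in G | v \in e]|.
Proof.
rewrite -(cardsID [set e : {set V} | v \in e] G) addnC.
have -> : G :&: [set e : {set V} | v \in e] = [set e in G | v \in e] by apply/setP=> e; rewrite !inE.
have -> : G :\: [set e : {set V} | v \in e] = [set e in G | v \notin e].
  by apply/setP=> e; rewrite !inE andbC.
by [].
Qed.

Lemma L1 n : forall c G, 0 < c -> unif c G -> #|G| <= 'C(n, c) ->
  c.+1 * #|clq c c.+1 G| <= #|G| * (n - c).
Proof.
elim: n => [|n IH] c G c0 hG hn.
  move: hn; rewrite bin0n gtn_eqF // leqn0 => /eqP h.
  by rewrite clq0 // muln0.
case: c c0 hG hn => [//|[|c]] _ hG hn; first exact: L1_1.
pose Gm v := [set e in G | v \notin e].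
pose Kv v := [set B in clq c.+2 c.+3 G | v \in B].
have F1 v : #|G| = #|Gm v| + #|Gv v G| by rewrite card_Gv; apply: card_split.
have F2m v : unif c.+2 (Gm v) by move=> e; rewrite inE => /andP[/hG].
have F2v v : unif c.+1 (Gv v G).
  move=> Y; rewrite inE => /andP[vY /hG]; rewrite cardsU1 vY add1n; by case.
have F3 v : #|clq c.+2 c.+3 G| <= #|clq c.+2 c.+3 (Gm v)| + #|Kv v|.
  rewrite (card_split v (clq _ _ _)) leq_add2r; apply: subset_leq_card.
  apply/subsetP=> B; rewrite inE => /andP[/clqP[cB h] vB]; apply/clqP; split=> // S sSB cS.
  rewrite inE h //; apply/negP=> vS; move: vB; by rewrite (subsetP sSB).
have F4 v : #|Kv v| <= #|Gm v|.
  apply: (@inj_card _ _ (fun B => B :\ v)).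
    by apply: injD1 => B; rewrite inE => /andP[].
  move=> B; rewrite inE => /andP[hB vB]; rewrite inE setD11 andbT.
  exact: clq_del hB vB.
have F5 v : #|Kv v| <= #|clq c.+1 c.+2 (Gv v G)|.
  apply: (@inj_card _ _ (fun B => B :\ v)).
    by apply: injD1 => B; rewrite inE => /andP[].
  move=> B; rewrite inE => /andP[/clqP[cB h] vB]; apply/clqP; split.
    by move: cB; rewrite (cardsD1 v) vB add1n => -[].
  move=> Y sY cY; rewrite inE; apply/andP; split.
    by apply/negP=> vY; move: (subsetP sY v vY); rewrite setD11.
  apply: h; last by rewrite cardsU1 cY; case: (v \in Y) (subsetP sY v) => //= /(_ isT); rewrite setD11.
  rewrite subUset sub1set vB /=; exact: (subset_trans sY (subD1set _ _)).
case: (boolP [exists v, 'C(n, c.+1) < #|Gv v G|]) => [/existsP[v hv]|hA].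
  have hB := F1 v; move: hn; rewrite binS hB => hn.
  have hg : #|Gm v| <= 'C(n, c.+2) by lia.
  have hg' : #|Gm v| < 'C(n, c.+2) by lia.
  have := IH c.+2 (Gm v) isT (F2m v) hg => hI.
  have hml := mul_bin_left n c.+1.
  have cn : c.+2 <= n by rewrite -bin_gt0; lia.
  have := F3 v; have := F4 v => h4 h3.
  have e1 : c.+2 * #|Gm v| <= (n - c.+1) * #|Gv v G|.
    apply: (leq_trans (leq_mul (leqnn _) hg)); rewrite hml leq_mul2l ltnW ?orbT //.
  have q1 : n.+1 - c.+2 = (n - c.+2) + 1 by lia.
  have q2 : n - c.+1 = (n - c.+2) + 1 by lia.
  rewrite q1; rewrite q2 in e1.
  move: hI h3 h4 e1 hB; set K := #|clq _ _ G|; set Km := #|clq _ _ (Gm v)|.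
  set k := #|Kv v|; set g := #|Gm v|; set d := #|Gv v G|; set p := n - c.+2.
  move=> hI h3 h4 e1 hB;
  nia.
have hA' v : #|Gv v G| <= 'C(n, c.+1).
  by rewrite leqNgt; apply/negP=> h; move: hA; rewrite negb_exists => /forallP/(_ v); rewrite h.
have hv v : c.+2 * #|Kv v| <= #|Gv v G| * (n - c.+1).
  exact: leq_trans (leq_mul (leqnn _) (F5 v)) (IH c.+1 _ isT (F2v v) (hA' v)).
have : \sum_(v : V) c.+2 * #|Kv v| <= \sum_(v : V) #|Gv v G| * (n - c.+1).
  by apply: leq_sum => v _; apply: hv.
rewrite -big_distrr -big_distrl /= (sum_deg (@clq_unif c.+2 c.+3 G)).
under eq_bigr do rewrite card_Gv.
rewrite (sum_deg hG) -mulnA leq_pmul2l // .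
Qed.

Lemma L2 a n G k : 0 < a -> unif a G -> #|G| <= 'C(n, a) ->
  #|clq a (a + k) G| * 'C(n, a) <= #|G| * 'C(n, a + k).
Proof.
move=> a0 hG hn; elim: k => [|k IH].
  rewrite addn0 leq_mul2r; apply/orP; right; apply: subset_leq_card.
  by apply/subsetP=> B /clqP[cB h]; apply: h.
case: (posnP 'C(n, a)) => [->|Cp]; first by rewrite muln0.
set b := a + k in IH *; rewrite addnS.
have hF : #|clq a b G| <= 'C(n, b).
  by rewrite -(leq_pmul2r Cp); apply: (leq_trans IH); rewrite mulnC leq_mul2l hn orbT.
have sub : clq a b.+1 G \subset clq b b.+1 (clq a b G).
  apply/subsetP=> B /clqP[cB h]; apply/clqP; split=> // S sS cS; apply/clqP; split=> //.
  by move=> S' sS' cS'; apply: h => //; apply: subset_trans sS' sS.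
have h1 := L1 (leq_trans a0 (leq_addr _ _)) (@clq_unif a b G) hF.
have h2 := subset_leq_card sub.
have hml := mul_bin_left n b.
rewrite -(leq_pmul2l (ltn0Sn b)).
move: h1 h2 hml IH; set K1 := #|clq a b.+1 G|; set K2 := #|clq b b.+1 _|.
set F := #|clq a b G|; set g := #|G|; set ca := 'C(n, a); set cb := 'C(n, b).
set cb1 := 'C(n, b.+1); set p := n - b => h1 h2 hml IH.
have e1 : b.+1 * K1 * ca <= p * F * ca.
  by rewrite leq_mul2r; apply/orP; right; rewrite (mulnC p); apply: leq_trans h1; rewrite leq_mul2l h2 orbT.
have e2 : p * F * ca <= p * g * cb by rewrite -!mulnA leq_mul2l IH orbT.
have e3 : p * g * cb = b.+1 * (g * cb1) by rewrite mulnAC -hml; ring.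
rewrite mulnA; apply: (leq_trans e1); rewrite -e3 //.
Qed.

End Core.

Lemma binID r s i : i <= s -> s <= r -> 'C(r, s) * 'C(s, i) = 'C(r, i) * 'C(r - i, s - i).
Proof.
move=> hi sr.
have P0 : 0 < i`! * (s - i)`! * (r - s)`! by rewrite !muln_gt0 !fact_gt0.
apply/eqP; rewrite -(eqn_pmul2r P0); apply/eqP.
have h1 := bin_fact sr; have h2 := bin_fact hi; have h4 := bin_fact (leq_trans hi sr).
have h3 := @bin_fact (r - i) (s - i) (leq_sub2r _ sr).
have e : r - i - (s - i) = r - s by lia.
rewrite e in h3.
transitivity ('C(r,s) * ('C(s,i) * (i`! * (s-i)`!)) * (r-s)`!); first ring.
rewrite h2 -mulnA h1.
symmetry; transitivity ('C(r,i) * (i`! * ('C(r-i,s-i) * ((s-i)`! * (r-s)`!)))); first ring.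
by rewrite h3.
Qed.

Lemma ktE (V : finType) s t (H : {set {set V}}) : kt s t H = #|clq s t H|.
Proof. by []. Qed.

Lemma UB (V : finType) (H : {set {set V}}) i s t r :
  0 < i -> i < s -> s <= t -> t <= r -> is_sgraph s H ->
  Delta i H <= 'C(r - i, s - i) -> kt s t H * 'C(r, s) <= #|H| * 'C(r, t).
Proof.
move=> i0 hi st tr hH hD.
have hI (I : {set V}) : #|I| == i ->
    #|[set T in clq s t H | I \subset T]| * 'C(r - i, s - i)
      <= hdeg H I * 'C(r - i, t - i).
  move=> /eqP cI.
  pose L := [set X : {set V} | [disjoint X & I] && (X :|: I \in H)].
  have hL : unif (s - i) L.
    move=> X; rewrite inE => /andP[dX /hH]; rewrite cardsU (disjoint_setI0 dX) cards0 subn0 cI.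
    by move=> <-; rewrite addnK.
  have cL : #|L| <= hdeg H I.
    apply: (@inj_card _ _ _ (fun X => X :|: I)).
      move=> X1 X2; rewrite !inE => /andP[d1 _] /andP[d2 _] /= e.
      apply/setP=> x; have := congr1 (fun A : {set V} => x \in A) e; rewrite /= !inE.
      have := congr1 (fun A : {set V} => x \in A) (disjoint_setI0 d1).
      have := congr1 (fun A : {set V} => x \in A) (disjoint_setI0 d2).
      rewrite !inE; case: (x \in X1); case: (x \in X2); case: (x \in I) => //.
    by move=> X; rewrite !inE => /andP[_ ->]; rewrite subsetUr.
  have cK : #|[set T in clq s t H | I \subset T]| <= #|clq (s - i) (t - i) L|.
    apply: (@inj_card _ _ _ (fun T => T :\: I)).
      move=> T1 T2; rewrite !inE => /andP[_ s1] /andP[_ s2] /= e.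
      apply/setP=> x; have := congr1 (fun A : {set V} => x \in A) e; rewrite /= !inE.
      case xI: (x \in I); last by rewrite /=.
      by rewrite (subsetP s1 _ xI) (subsetP s2 _ xI).
    move=> T; rewrite inE => /andP[/clqP[cT h] sIT]; apply/clqP; split.
      by rewrite cardsD (setIidPr sIT) cT cI.
    move=> S sS cS; rewrite inE; apply/andP; split.
      rewrite -setI_eq0; apply/eqP/setP=> x; rewrite !inE; apply/negP=> /andP[xS xI]; move: (subsetP sS x xS); by rewrite inE xI.
    apply: h; first by rewrite subUset sIT andbT; apply: subset_trans sS (subsetDl _ _).
    rewrite cardsU cS cI.
    have -> : S :&: I = set0.
      apply/setP=> x; rewrite !inE; apply/negP=> /andP[xS xI].
      by move: (subsetP sS x xS); rewrite inE xI.
    by rewrite cards0 subn0 subnK // ltnW.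
  have hDI : hdeg H I <= Delta i H.
    by rewrite /Delta; apply: (@leq_bigmax_cond _ (fun I : {set V} => #|I| == i) (hdeg H) I); rewrite cI.
  have a0 : 0 < s - i by rewrite subn_gt0.
  have hL2 := L2 (t - s) a0 hL (leq_trans cL (leq_trans hDI hD)).
  have e : s - i + (t - s) = t - i by lia.
  rewrite e in hL2.
  apply: leq_trans (leq_mul cK (leqnn _)) (leq_trans hL2 (leq_mul cL (leqnn _))).
have hs : \sum_(I : {set V} | #|I| == i) #|[set T in clq s t H | I \subset T]| * 'C(r - i, s - i)
   <= \sum_(I : {set V} | #|I| == i) hdeg H I * 'C(r - i, t - i).
  by apply: leq_sum => I; apply: hI.
have hH' : unif s H by [].
rewrite -!big_distrl /= (sum_sdeg _ (@clq_unif _ s t H)) /hdeg (sum_sdeg _ hH') in hs.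
rewrite ktE.
have P0 : 0 < 'C(s, i) * 'C(t, i) by rewrite muln_gt0 !bin_gt0 (ltnW hi) (ltnW (leq_trans hi st)).
rewrite -(leq_pmul2r P0).
set K := #|clq s t H|; set m := #|H|.
have E1 : K * 'C(r, s) * ('C(s, i) * 'C(t, i)) = 'C(r, i) * ('C(t, i) * K * 'C(r - i, s - i)).
  transitivity (K * ('C(r, s) * 'C(s, i)) * 'C(t, i)); first ring.
  rewrite binID ?(ltnW hi) ?(leq_trans st tr) //; ring.
have E2 : 'C(r, i) * ('C(s, i) * m * 'C(r - i, t - i)) = m * 'C(r, t) * ('C(s, i) * 'C(t, i)).
  transitivity ('C(s, i) * m * ('C(r, i) * 'C(r - i, t - i))); first ring.
  rewrite -binID ?(ltnW (leq_trans hi st)) //; ring.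
by rewrite E1 -E2 leq_mul2l hs orbT.
Qed.

Lemma cnt (W : finType) (Bk I : {set W}) s : I \subset Bk ->
  #|[set e : {set W} | (I \subset e) && (e \subset Bk) && (#|e| == s)]|
    <= 'C(#|Bk| - #|I|, s - #|I|).
Proof.
move=> sIB; rewrite -(cardsDS sIB) -cards_draws.
apply: (@inj_card _ _ _ (fun e => e :\: I)).
  move=> T1 T2; rewrite !inE => /andP[/andP[s1 _] _] /andP[/andP[s2 _] _] /= e.
  apply/setP=> x; have := congr1 (fun A : {set W} => x \in A) e; rewrite /= !inE.
  case xI: (x \in I); last by rewrite /=.
  by rewrite (subsetP s1 _ xI) (subsetP s2 _ xI).
move=> e; rewrite !inE => /andP[/andP[sI sB] /eqP ce].
by rewrite setSD //= cardsDS // ce.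
Qed.

Lemma ktE' (V : finType) s t (H : {set {set V}}) : kt s t H = #|clq s t H|.
Proof. by []. Qed.

Section Constr.
Variables q rem r : nat.
Local Notation V := ('I_(q + rem) * 'I_r)%type.

Definition emb (j : 'I_(q + rem)) (A : {set 'I_r}) : {set V} := [set (j, x) | x in A].

Lemma embE j A y : (y \in emb j A) = (y.1 == j) && (y.2 \in A).
Proof.
apply/imsetP/andP => [[x xA ->]|[/eqP e yA]]; first by rewrite eqxx.
by exists y.2 => //; case: y e yA => /= a b ->.
Qed.

Lemma card_emb j A : #|emb j A| = #|A|.
Proof. by rewrite card_imset // => x y []. Qed.

Lemma emb_inj j j' A A' : A != set0 -> emb j A = emb j' A' -> j = j' /\ A = A'.
Proof.
move=> /set0Pn[x xA] e.
have : (j, x) \in emb j' A' by rewrite -e embE eqxx.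
rewrite embE /= => /andP[/eqP jj _]; split=> //; subst j'.
apply/setP=> y; have := congr1 (fun B : {set V} => (j, y) \in B) e.
by rewrite /= !embE eqxx.
Qed.

Definition fam k := [set emb (lshift rem p.1) p.2 |
   p in [set p : 'I_q * {set 'I_r} | #|p.2| == k]].

Lemma card_fam k : 0 < k -> #|fam k| = q * 'C(r, k).
Proof.
move=> k0; rewrite card_in_imset.
  have -> : [set p : 'I_q * {set 'I_r} | #|p.2| == k] = setX [set: 'I_q] [set A : {set 'I_r} | #|A| == k].
    by apply/setP=> p; rewrite !inE.
  by rewrite cardsX cardsT card_ord card_draws card_ord.
move=> [j A] [j' A']; rewrite !inE /= => /eqP cA _ e.
have [] := emb_inj _ e; first by rewrite -card_gt0 cA.
by move/lshift_inj => -> ->.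
Qed.


Lemma LB i s t : 0 < i -> i < s -> s <= t -> t <= r ->
  exists H : {set {set V}}, [/\ is_sgraph s H, #|H| = q * 'C(r, s) + rem,
     Delta i H <= 'C(r - i, s - i) & q * 'C(r, t) <= kt s t H].
Proof.
move=> i0 hi st tr; have s0 : 0 < s by apply: leq_ltn_trans hi.
have [A0 cA0] : exists A0 : {set 'I_r}, #|A0| = s.
  have : 0 < #|[set A : {set 'I_r} | #|A| == s]| by rewrite card_draws card_ord bin_gt0 (leq_trans st tr).
  by rewrite card_gt0 => /set0Pn[A]; rewrite inE => /eqP; exists A.
have A0n : A0 != set0 by rewrite -card_gt0 cA0.
pose H2 := [set emb (rshift q k) A0 | k in [set: 'I_rem]].
pose H := fam s :|: H2.
have shape e : e \in H -> exists j A, e = emb j A /\ #|A| = s.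
  rewrite inE => /orP[/imsetP[[j A] /=]|/imsetP[k _ ->]]; last by exists (rshift q k), A0.
  by rewrite inE /= => /eqP cA ->; exists (lshift rem j), A.
exists H; split.
- by move=> e /shape[j [A [-> <-]]]; rewrite card_emb.
- rewrite cardsU card_fam //.
  have -> : fam s :&: H2 = set0.
    apply/setP=> e; rewrite !inE; apply/negP=> /andP[/imsetP[[j A] _ ->] /imsetP[k _ e2]].
    have [x xA0] := set0Pn _ A0n.
    have : (rshift q k, x) \in emb (lshift rem j) A by rewrite e2 embE eqxx.
    by rewrite embE /= eq_rlshift.
  rewrite cards0 subn0 card_imset ?cardsT ?card_ord //.
  by move=> k k' /emb_inj [] // /rshift_inj.
- apply/bigmax_leqP => I /eqP cI.
  have [x0 x0I] : exists x0, x0 \in I.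
    by apply/set0Pn; rewrite -card_gt0 cI.
  pose Bk := emb x0.1 setT.
  have sub : [set e in H | I \subset e] \subset
             [set e : {set V} | (I \subset e) && (e \subset Bk) && (#|e| == s)].
    apply/subsetP=> e; rewrite inE => /andP[eH sIe]; rewrite inE.
    have [j [A [ee cA]]] := shape e eH.
    rewrite sIe /= ee card_emb cA eqxx andbT.
    have := subsetP sIe x0 x0I; rewrite ee embE => /andP[/eqP <- _].
    apply/subsetP=> y; rewrite !embE => /andP[-> _]; by rewrite in_setT.
  rewrite /hdeg; apply: leq_trans (subset_leq_card sub) _.
  have [hIB|nIB] := boolP (I \subset Bk).
    by apply: leq_trans (cnt s hIB) _; rewrite card_emb cardsT card_ord cI.
  suff -> : [set e : {set V} | (I \subset e) && (e \subset Bk) && (#|e| == s)] = set0 by rewrite cards0.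
  apply/setP=> e; rewrite !inE.
  apply/negP=> /andP[/andP[h1 h2] _]; move: nIB; by rewrite (subset_trans h1 h2).
- rewrite -card_fam ?(leq_trans s0 st) // ktE'; apply: subset_leq_card.
  apply/subsetP=> T /imsetP[[j A]]; rewrite inE /= => /eqP cA ->.
  apply/clqP; split; first by rewrite card_emb.
  move=> S sS cS; rewrite inE; apply/orP; left.
  pose A' := [set x | (lshift rem j, x) \in S].
  have eS : S = emb (lshift rem j) A'.
    apply/setP=> y; rewrite embE inE; apply/idP/idP => [yS|/andP[/eqP e yA]].
      have := subsetP sS y yS; rewrite embE => /andP[/eqP e _].
      by case: y yS e => a b /= yS ea; subst a; rewrite eqxx yS.
    by case: y e yA => a b /= ->.
  apply/imsetP; exists (j, A') => //=.
  by rewrite inE /= -(card_emb (lshift rem j)) -eS cS.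
Qed.

End Constr.

Unset Implicit Arguments.
Local Open Scope ring_scope.

Theorem mainTheorem18 (i s t r : nat) :
  (1 <= i)%N -> (i < s)%N -> (s <= t)%N -> (t <= r)%N ->
  forall eps : rat, 0 < eps ->
  exists m0 : nat, forall m : nat, (m0 <= m)%N -> (1 <= m)%N ->
    (forall (V : finType) (H : {set {set V}}),
        is_sgraph s H -> #|H| = m -> (Delta i H <= 'C(r - i, s - i))%N ->
        (kt s t H)%:R <= (1 + eps) * m%:R * 'C(r, t)%:R / 'C(r, s)%:R)
    /\
    (exists (V : finType) (H : {set {set V}}),
        [/\ is_sgraph s H, #|H| = m, (Delta i H <= 'C(r - i, s - i))%N &
        (1 - eps) * m%:R * 'C(r, t)%:R / 'C(r, s)%:R <= (kt s t H)%:R]).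
Proof.
move=> i0 hi st tr eps e0.
have Cs0 : (0 < 'C(r, s))%N by rewrite bin_gt0 (leq_trans st tr).
have CsR : 0 < 'C(r, s)%:R :> rat by rewrite ltr0n.
have CtR : 0 <= 'C(r, t)%:R :> rat by rewrite ler0n.
pose N := Num.Def.archi_bound (eps^-1).
have hN : eps^-1 < N%:R by apply: archi_boundP; rewrite invr_ge0 ltW.
have eN : 1 < eps * N%:R.
  by rewrite -(ltr_pM2l e0) mulfV ?gt_eqF // in hN.
exists (N * 'C(r, s))%N => m hm m1; split.
  move=> V H hH cH hD.
  have h := UB i0 hi st tr hH hD; rewrite cH in h.
  have h' : (kt s t H)%:R * 'C(r, s)%:R <= m%:R * 'C(r, t)%:R :> rat.
    by rewrite -!natrM ler_nat.
  rewrite ler_pdivlMr //.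
  have m0 : 0 <= m%:R :> rat by rewrite ler0n.
  have p0 : 0 <= eps * (m%:R * 'C(r, t)%:R) by apply: mulr_ge0; [exact: ltW | exact: mulr_ge0].
  have -> : (1 + eps) * m%:R * 'C(r, t)%:R = m%:R * 'C(r, t)%:R + eps * (m%:R * 'C(r, t)%:R) by ring.
  lra.
pose q := (m %/ 'C(r, s))%N; pose rm := (m %% 'C(r, s))%N.
have [H [hH cH hD hK]] := LB q rm i0 hi st tr.
exists ('I_(q + rm) * 'I_r)%type, H; split=> //.
  by rewrite cH /q /rm -divn_eq.
have qN : (N <= q)%N by rewrite /q leq_divRL.
have mq : (m < q.+1 * 'C(r, s))%N by rewrite /q ltn_ceil.
have mq' : (q * 'C(r, s) <= m)%N by rewrite /q leq_divM.
have qR : N%:R <= q%:R :> rat by rewrite ler_nat.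
have mqR : m%:R < q%:R * 'C(r, s)%:R + 'C(r, s)%:R :> rat.
  by rewrite -natrM -natrD ltr_nat -mulSnr.
have mqR' : q%:R * 'C(r, s)%:R <= m%:R :> rat by rewrite -natrM ler_nat.
have hKR : q%:R * 'C(r, t)%:R <= (kt s t H)%:R :> rat by rewrite -natrM ler_nat.
have h1 : 1 <= eps * q%:R by apply: ltW; apply: (lt_le_trans eN); rewrite ler_pM2l.
have h2 : (1 - eps) * m%:R <= q%:R * 'C(r, s)%:R by nra.
rewrite ler_pdivrMr //.
nra.
Qed.
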